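(* For every set of formulas $\Gamma$ and every formula $\varphi$: if $\Gamma\vdash_{\mathsf{iSLH}}\varphi$, then there is a finite multiset $\Gamma'$ whose elements all belong to $\Gamma$ such that the sequent $\Gamma'\Rightarrow\varphi$ is provable in $\mathsf{G4iSLt}$.
   Context: Formulas are built by the grammar $\varphi ::= p \mid \bot \mid \varphi\land\varphi \mid \varphi\lor\varphi \mid \varphi\to\varphi \mid \Box\varphi$, with $p$ ranging over a countably infinite set of propositional variables. For a multiset $\Gamma$, $\Box\Gamma=\{\Box\psi:\psi\in\Gamma\}$; a boxed formula is one of the form $\Box\psi$. The generalised Hilbert calculus $\mathsf{iSLH}$ derives expressions $\Gamma\vdash\varphi$ ($\Gamma$ a set of formulas) by the rules: (Ax) $\Gamma\vdash\varphi$ whenever $\varphi$ is an instance of an axiom; (El) $\Gamma\vdash\varphi$ whenever $\varphi\in\Gamma$; (Nec) from $\emptyset\vdash\varphi$ infer $\Gamma\vdash\Box\varphi$; (MP) from $\Gamma\vdash\varphi$ and $\Gamma\vdash\varphi\to\psi$ infer $\Gamma\vdash\psi$. The axioms are all instances of: $\varphi\to(\psi\to\varphi)$; $(\varphi\to(\psi\to\chi))\to((\varphi\to\psi)\to(\varphi\to\chi))$; $\varphi\to(\varphi\lor\psi)$; $\psi\to(\varphi\lor\psi)$; $(\varphi\to\chi)\to((\psi\to\chi)\to((\varphi\lor\psi)\to\chi))$; $(\varphi\land\psi)\to\varphi$; $(\varphi\land\psi)\to\psi$; $(\varphi\to\psi)\to((\varphi\to\chi)\to(\varphi\to(\psi\land\chi)))$;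 $\bot\to\varphi$; $\Box(\varphi\to\psi)\to(\Box\varphi\to\Box\psi)$; $(\Box\varphi\to\varphi)\to\varphi$. A sequent is $\Gamma\Rightarrow\chi$ with $\Gamma$ a finite multiset of formulas and $\chi$ a formula. The sequent calculus $\mathsf{G4iSLt}$ has the following rules, where $p$ is a propositional variable and $\Phi$ always denotes a multiset containing no boxed formula: (⊥L) $\bot,\Gamma\Rightarrow\chi$ (no premise); (IdP) $\Gamma,p\Rightarrow p$ (no premise); (∧L) from $\Gamma,\varphi,\psi\Rightarrow\chi$ infer $\Gamma,\varphi\land\psi\Rightarrow\chi$; (∧R) from $\Gamma\Rightarrow\varphi$ and $\Gamma\Rightarrow\psi$ infer $\Gamma\Rightarrow\varphi\land\psi$; (∨L) from $\Gamma,\varphi\Rightarrow\chi$ and $\Gamma,\psi\Rightarrow\chi$ infer $\Gamma,\varphi\lor\psi\Rightarrow\chi$; (∨R$_i$), $i\in\{1,2\}$: from $\Gamma\Rightarrow\varphi_i$ infer $\Gamma\Rightarrow\varphi_1\lor\varphi_2$; (p→L) from $\Gamma,p,\varphi\Rightarrow\chi$ infer $\Gamma,p,p\to\varphi\Rightarrow\chi$; (→R) from $\Gamma,\varphi\Rightarrow\psi$ infer $\Gamma\Rightarrow\varphi\to\psi$; (□→L) from $\Phi,\Gamma,\psi,\Box\varphi\Rightarrow\varphi$ and $\Phi,\Box\Gamma,\psi\Rightarrow\chi$ infer $\Phi,\Box\Gamma,\Box\varphi\to\psi\Rightarrow\chi$; (SLtR) from $\Phi,\Gamma,\Box\varphi\Rightarrow\varphi$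 infer $\Phi,\Box\Gamma\Rightarrow\Box\varphi$; (∧→L) from $\Gamma,\varphi\to(\psi\to\chi)\Rightarrow\delta$ infer $\Gamma,(\varphi\land\psi)\to\chi\Rightarrow\delta$; (∨→L) from $\Gamma,\varphi\to\chi,\psi\to\chi\Rightarrow\delta$ infer $\Gamma,(\varphi\lor\psi)\to\chi\Rightarrow\delta$; (→→L) from $\Gamma,\psi\to\chi\Rightarrow\varphi\to\psi$ and $\Gamma,\chi\Rightarrow\delta$ infer $\Gamma,(\varphi\to\psi)\to\chi\Rightarrow\delta$. A proof of a sequent $S$ is a finite tree of sequents with root $S$ in which each interior node together with its children forms an instance of a rule (conclusion, premises) and each leaf is the conclusion of a premise-free rule; $S$ is provable if it has a proof. *)

(* Defs.v *)
(* Multisets are lists taken up to permutation. *)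
From Stdlib Require Import List Permutation.
Import ListNotations.

Inductive form : Type :=
| Var : nat -> form
| Bot : form
| And : form -> form -> form
| Or : form -> form -> form
| Imp : form -> form -> form
| Box : form -> form.

Inductive Axiom_iSL : form -> Prop :=
| A1 : forall a b, Axiom_iSL (Imp a (Imp b a))
| A2 : forall a b c, Axiom_iSL (Imp (Imp a (Imp b c)) (Imp (Imp a b) (Imp a c)))
| A3 : forall a b, Axiom_iSL (Imp a (Or a b))
| A4 : forall a b, Axiom_iSL (Imp b (Or a b))
| A5 : forall a b c, Axiom_iSL (Imp (Imp a c) (Imp (Imp b c) (Imp (Or a b) c)))
| A6 : forall a b, Axiom_iSL (Imp (And a b) a)
| A7 : forall a b, Axiom_iSL (Imp (And a b) b)
| A8 : forall a b c, Axiom_iSL (Imp (Imp a b) (Imp (Imp a c) (Imp a (And b c))))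
| A9 : forall a, Axiom_iSL (Imp Bot a)
| AK : forall a b, Axiom_iSL (Imp (Box (Imp a b)) (Imp (Box a) (Box b)))
| ASL : forall a, Axiom_iSL (Imp (Imp (Box a) a) a).

Inductive iSLH : (form -> Prop) -> form -> Prop :=
| H_Ax : forall G a, Axiom_iSL a -> iSLH G a
| H_El : forall (G : form -> Prop) a, G a -> iSLH G a
| H_Nec : forall G a, iSLH (fun _ => False) a -> iSLH G (Box a)
| H_MP : forall G a b, iSLH G a -> iSLH G (Imp a b) -> iSLH G b.

Definition is_box (a : form) : Prop := match a with Box _ => True | _ => False end.

Definition box_free (Phi : list form) : Prop := forall a, In a Phi -> ~ is_box a.

(* G4iSLt; the context of a conclusion is any list permutation-equivalent
   (i.e. equal as multiset) to the displayed one. *)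
Inductive G4iSLt : list form -> form -> Prop :=
| BotL : forall D G c, Permutation D (Bot :: G) -> G4iSLt D c
| IdP : forall D G p, Permutation D (Var p :: G) -> G4iSLt D (Var p)
| AndL : forall D G a b c,
    G4iSLt (a :: b :: G) c -> Permutation D (And a b :: G) -> G4iSLt D c
| AndR : forall G a b, G4iSLt G a -> G4iSLt G b -> G4iSLt G (And a b)
| OrL : forall D G a b c,
    G4iSLt (a :: G) c -> G4iSLt (b :: G) c -> Permutation D (Or a b :: G) ->
    G4iSLt D c
| OrR1 : forall G a b, G4iSLt G a -> G4iSLt G (Or a b)
| OrR2 : forall G a b, G4iSLt G b -> G4iSLt G (Or a b)
| PImpL : forall D G p a c,
    G4iSLt (Var p :: a :: G) c -> Permutation D (Var p :: Imp (Var p) a :: G) ->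
    G4iSLt D c
| ImpR : forall G a b, G4iSLt (a :: G) b -> G4iSLt G (Imp a b)
| BoxImpL : forall D Phi G a b c,
    box_free Phi ->
    G4iSLt (Phi ++ G ++ [b; Box a]) a ->
    G4iSLt (Phi ++ map Box G ++ [b]) c ->
    Permutation D (Phi ++ map Box G ++ [Imp (Box a) b]) ->
    G4iSLt D c
| SLtR : forall D Phi G a,
    box_free Phi ->
    G4iSLt (Phi ++ G ++ [Box a]) a ->
    Permutation D (Phi ++ map Box G) ->
    G4iSLt D (Box a)
| AndImpL : forall D G a b c d,
    G4iSLt (Imp a (Imp b c) :: G) d -> Permutation D (Imp (And a b) c :: G) ->
    G4iSLt D d
| OrImpL : forall D G a b c d,
    G4iSLt (Imp a c :: Imp b c :: G) d -> Permutation D (Imp (Or a b) c :: G) ->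
    G4iSLt D d
| ImpImpL : forall D G a b c d,
    G4iSLt (Imp b c :: G) (Imp a b) -> G4iSLt (c :: G) d ->
    Permutation D (Imp (Imp a b) c :: G) -> G4iSLt D d.

(* Main.v *)
Require Import Defs.
From Stdlib Require Import List Permutation Lia Classical.
Import ListNotations.

Record model := {
  mle : list nat -> list nat -> Prop;
  mR : list nat -> list nat -> Prop;
  mV : list nat -> nat -> Prop;
  mle_refl : forall w, mle w w;
  mle_trans : forall u v w, mle u v -> mle v w -> mle u w;
  mR_le : forall w v, mR w v -> mle w v;
  mle_R : forall w u v, mle w u -> mR u v -> mR w v;
  mR_wf : forall w, Acc (fun x y => mR y x) w;
  mV_mon : forall w v p, mle w v -> mV w p -> mV v p }.

Fixpoint frc (M : model) (w : list nat) (f : form) : Prop :=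
  match f with
  | Var p => mV M w p
  | Bot => False
  | And a b => frc M w a /\ frc M w b
  | Or a b => frc M w a \/ frc M w b
  | Imp a b => forall v, mle M w v -> frc M v a -> frc M v b
  | Box a => forall v, mR M w v -> frc M v a
  end.

Lemma frc_mon M f : forall w v, mle M w v -> frc M w f -> frc M v f.
Proof.
  induction f; simpl; intros w v Hle H.
  - eapply mV_mon; eauto.
  - exact H.
  - destruct H; split; eauto.
  - destruct H; [left|right]; eauto.
  - intros u Hu. apply H. eapply mle_trans; eauto.
  - intros u Hu. apply H. eapply mle_R; eauto.
Qed.

Lemma sl_acc M a : forall u, Acc (fun x y => mR M y x) u ->
  frc M u (Imp (Box a) a) -> frc M u a.
Proof.
  induction 1 as [u _ IH]; intros H.
  apply (H u (mle_refl _ _)). intros v Ruv. apply IH; auto.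
  eapply frc_mon; [apply mR_le; eauto| exact H].
Qed.

Lemma ax_sound M w a : Axiom_iSL a -> frc M w a.
Proof.
  intros Hax; destruct Hax; simpl.
  - intros v1 _ Ha v2 H12 _. eapply frc_mon; eauto.
  - intros v1 _ H v2 H12 H' v3 H23 Ha.
    apply (H v3 (mle_trans _ _ _ _ H12 H23) Ha v3 (mle_refl _ _) (H' v3 H23 Ha)).
  - intros v _ H; left; auto.
  - intros v _ H; right; auto.
  - intros v1 _ H1 v2 H12 H2 v3 H23 [Ha|Hb].
    + apply (H1 v3 (mle_trans _ _ _ _ H12 H23) Ha).
    + apply (H2 v3 H23 Hb).
  - intros v _ [H _]; auto.
  - intros v _ [_ H]; auto.
  - intros v1 _ H1 v2 H12 H2 v3 H23 Ha. split.
    + apply (H1 v3 (mle_trans _ _ _ _ H12 H23) Ha).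
    + apply (H2 v3 H23 Ha).
  - intros v _ [].
  - intros v1 _ H1 v2 H12 H2 v3 R23.
    apply (H1 v3 (mle_R _ _ _ _ H12 R23) v3 (mle_refl _ _) (H2 v3 R23)).
  - intros v _ H. apply sl_acc; auto. apply mR_wf.
Qed.

Lemma hsound G a : iSLH G a -> forall M w, (forall b, G b -> frc M w b) -> frc M w a.
Proof.
  induction 1 as [G a Hax|G a Hg|G a Ha IH|G a b Ha IHa Hb IHb]; intros M w HG.
  - apply ax_sound; auto.
  - auto.
  - simpl. intros v _. apply IH. intros b [].
  - apply (IHb M w HG w (mle_refl _ _) (IHa M w HG)).
Qed.

Lemma hmono G a (H : iSLH G a) : forall G', (forall x, G x -> G' x) -> iSLH G' a.
Proof.
  induction H as [G a Hax|G a Hg|G a Ha IH|G a b Ha IHa Hb IHb]; intros G' HG.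
  - apply H_Ax; auto.
  - apply H_El; auto.
  - apply H_Nec; auto.
  - eapply H_MP; eauto.
Qed.

Lemma hfin G a : iSLH G a -> exists L, (forall b, In b L -> G b) /\ iSLH (fun x => In x L) a.
Proof.
  induction 1 as [G a Hax|G a Hg|G a Ha IH|G a b Ha IHa Hb IHb].
  - exists []; split; [intros _ []| apply H_Ax; auto].
  - exists [a]; split; [intros b [<-|[]]; auto | apply H_El; simpl; auto].
  - exists []; split; [intros _ [] | apply H_Nec; auto].
  - destruct IHa as [L1 [H1 P1]]; destruct IHb as [L2 [H2 P2]].
    exists (L1 ++ L2); split.
    + intros x Hx; apply in_app_or in Hx; destruct Hx; auto.
    + apply H_MP with a; eapply hmono; eauto; intros; apply in_or_app; auto.
Qed.

Fixpoint e (f : form) : nat :=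
  match f with
  | Var _ => 3
  | Bot => 3
  | And a b => 9 * e a * e b
  | Or a b => 3 * e a * e b
  | Imp a b => 3 * e a * e b
  | Box a => 3 * e a
  end.

Lemma e_ge f : 3 <= e f.
Proof. induction f; simpl; nia. Qed.

Fixpoint sumL (l : list form) : nat :=
  match l with [] => 0 | f :: l => e f + sumL l end.

Lemma sumL_app l m : sumL (l ++ m) = sumL l + sumL m.
Proof. induction l; simpl; lia. Qed.

Lemma sumL_perm l m : Permutation l m -> sumL l = sumL m.
Proof. induction 1; simpl; lia. Qed.

Lemma sumL_mapBox G : sumL G <= sumL (map Box G).
Proof. induction G; simpl; lia. Qed.

Definition meas (l : list form) (c : form) := sumL l + 2 * e c.

Definition CM (l : list form) (c : form) :=
  exists M w, (forall f, In f l -> frc M w f) /\ ~ frc M w c.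

Lemma perm_ex (x : form) l : In x l -> exists l', Permutation l (x :: l').
Proof.
  intros H; destruct (in_split _ _ H) as [l1 [l2 ->]]; exists (l1++l2).
  apply Permutation_sym, Permutation_middle.
Qed.

Lemma perm_in (x f : form) l l' : Permutation l (x :: l') -> In f l -> f = x \/ In f l'.
Proof.
  intros HP Hf. apply (Permutation_in _ HP) in Hf. destruct Hf; auto.
Qed.

Fixpoint split_box (l : list form) : list form * list form :=
  match l with
  | [] => ([], [])
  | f :: l => let (P, G) := split_box l in
      match f with Box a => (P, a :: G) | _ => (f :: P, G) end
  end.

Lemma split_box_ok l : box_free (fst (split_box l)) /\
  Permutation l (fst (split_box l) ++ map Box (snd (split_box l))).
Proof.
  induction l as [|f l IH]; simpl.
  - split; [intros a []| constructor].
  - destruct (split_box l) as [P G]; simpl in *. destruct IH as [Hb Hp].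
    destruct f; simpl;
    try (split; [intros x [<-|Hx]; [simpl; tauto| apply Hb; exact Hx] | constructor; exact Hp]).
    split; auto. eapply perm_trans; [apply perm_skip, Hp| apply Permutation_middle].
Qed.

Lemma in_split_nb P G g : box_free P -> In g (P ++ map Box G) -> ~ is_box g -> In g P.
Proof.
  intros Hb H Hn. apply in_app_or in H; destruct H as [H|H]; auto.
  apply in_map_iff in H. destruct H as [y [<- _]]. simpl in Hn; tauto.
Qed.

Lemma in_split_b P G g : box_free P -> In (Box g) (P ++ map Box G) -> In g G.
Proof.
  intros Hb H. apply in_app_or in H; destruct H as [H|H].
  - exfalso; apply (Hb _ H); simpl; auto.
  - apply in_map_iff in H. destruct H as [y [Hy Hy']]. injection Hy; intros ->; auto.
Qed.

Record entry := mkE { eM : model; ex : list nat; em : bool }.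

Definition dummy : model.
Proof.
  refine {| mle := eq; mR := fun _ _ => False; mV := fun _ _ => False |}.
  - auto.
  - intros; subst; auto.
  - intros _ _ [].
  - intros _ _ _ _ [].
  - intros w; constructor; intros y [].
  - intros _ _ _ _ [].
Defined.

Definition dE := mkE dummy [] false.
Definition Ei (subs : list entry) i := nth i subs dE.

Definition gle (subs : list entry) (w v : list nat) : Prop :=
  match w, v with
  | [], [] => True
  | [], i :: v => i < length subs /\ mle (eM (Ei subs i)) (ex (Ei subs i)) v
  | _ :: _, [] => False
  | i :: w, j :: v => i = j /\ mle (eM (Ei subs i)) w v
  end.

Definition gR (subs : list entry) (w v : list nat) : Prop :=
  match w, v with
  | _, [] => False
  | [], i :: v => i < length subs /\
      (if em (Ei subs i) then mle (eM (Ei subs i)) (ex (Ei subs i)) v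
       else exists u, mle (eM (Ei subs i)) (ex (Ei subs i)) u /\ mR (eM (Ei subs i)) u v)
  | i :: w, j :: v => i = j /\ mR (eM (Ei subs i)) w v
  end.

Definition gV (l : list form) (subs : list entry) (w : list nat) (p : nat) : Prop :=
  match w with [] => In (Var p) l | i :: w => mV (eM (Ei subs i)) w p end.

Lemma gR_acc subs i : forall w, Acc (fun x y => mR (eM (Ei subs i)) y x) w ->
  Acc (fun x y => gR subs y x) (i :: w).
Proof.
  induction 1 as [w _ IH]. constructor. intros y Hy.
  destruct y as [|j y]; simpl in Hy; [contradiction|].
  destruct Hy as [<- Hy]. apply IH; auto.
Qed.

Definition glue (l : list form) (subs : list entry)
  (H1 : forall i, i < length subs -> forall p, In (Var p) l ->
     mV (eM (Ei subs i)) (ex (Ei subs i)) p) : model.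
Proof.
  refine {| mle := gle subs; mR := gR subs; mV := gV l subs |}.
  - intros [|i w]; simpl; auto using mle_refl.
  - intros [|i u] [|j v] [|k w]; simpl; try tauto.
    + intros [Hi H] [<- H']; split; eauto using mle_trans.
    + intros [<- H] [<- H']; split; eauto using mle_trans.
  - intros [|i w] [|j v]; simpl; try tauto.
    + intros [Hi H]; split; auto. destruct (em (Ei subs j)); auto.
      destruct H as [u [Hu Hr]]. eauto using mle_trans, mR_le.
    + intros [<- H]; split; auto using mR_le.
  - intros [|i w] [|j u] [|k v]; simpl; try tauto.
    + intros [Hj H] [<- H']; split; auto. destruct (em (Ei subs j)); eauto.
      eapply mle_trans; eauto using mR_le.
    + intros [<- H] [<- H']; split; eauto using mle_R.
  - intros [|i w].
    + constructor. intros [|j y] Hy; simpl in Hy; [contradiction|].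
      apply gR_acc, mR_wf.
    + apply gR_acc, mR_wf.
  - intros [|i w] [|j v] p; simpl; try tauto.
    + intros [Hj H] Hp. eapply mV_mon; eauto.
    + intros [<- H] Hp. eapply mV_mon; eauto.
Defined.

Lemma glue_sub l subs H1 a : forall i w,
  frc (glue l subs H1) (i :: w) a <-> frc (eM (Ei subs i)) w a.
Proof.
  induction a as [p| |a IHa b IHb|a IHa b IHb|a IHa b IHb|a IHa]; intros i w; simpl.
  - tauto.
  - tauto.
  - rewrite IHa, IHb; tauto.
  - rewrite IHa, IHb; tauto.
  - split.
    + intros H v Hle Ha. apply IHb, H; [split; auto | apply IHa; auto].
    + intros H [|j v] Hle Ha; simpl in Hle; [contradiction|].
      destruct Hle as [<- Hle]. apply IHb, H; auto. apply IHa; auto.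
  - split.
    + intros H v Hr. apply IHa, H. split; auto.
    + intros H [|j v] Hr; simpl in Hr; [contradiction|].
      destruct Hr as [<- Hr]. apply IHa, H; auto.
Qed.

Lemma In_Ei subs (x : entry) : In x subs -> exists i, i < length subs /\ Ei subs i = x.
Proof. intros H. destruct (In_nth _ _ dE H) as [i [Hi Hn]]. exists i; auto. Qed.

Lemma root_to_sub l subs H1 a x : In x subs -> frc (glue l subs H1) [] a -> frc (eM x) (ex x) a.
Proof.
  intros Hx H. destruct (In_Ei _ _ Hx) as [i [Hi <-]].
  apply (glue_sub l subs H1 a i). eapply frc_mon; [|exact H].
  simpl. split; auto using mle_refl.
Qed.

Lemma root_box_to_sub l subs H1 a x : In x subs -> em x = true ->
  frc (glue l subs H1) [] (Box a) -> frc (eM x) (ex x) a.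
Proof.
  intros Hx Hm H. destruct (In_Ei _ _ Hx) as [i [Hi <-]].
  apply (glue_sub l subs H1 a i). apply H.
  simpl. split; auto. rewrite Hm. apply mle_refl.
Qed.

Lemma root_imp l subs H1 a b :
  (frc (glue l subs H1) [] a -> frc (glue l subs H1) [] b) ->
  (forall x, In x subs -> frc (eM x) (ex x) (Imp a b)) ->
  frc (glue l subs H1) [] (Imp a b).
Proof.
  intros H H' [|i v] Hle Ha; auto.
  destruct Hle as [Hi Hle]. apply glue_sub. apply glue_sub in Ha.
  apply (H' (Ei subs i) (nth_In _ _ Hi) v Hle Ha).
Qed.

Lemma root_box l subs H1 a :
  (forall x, In x subs -> if em x then frc (eM x) (ex x) a else frc (eM x) (ex x) (Box a)) ->
  frc (glue l subs H1) [] (Box a).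
Proof.
  intros H [|i v] HR; [contradiction|].
  destruct HR as [Hi HR]. apply glue_sub.
  specialize (H (Ei subs i) (nth_In _ _ Hi)).
  destruct (em (Ei subs i)).
  - eapply frc_mon; eauto.
  - destruct HR as [u [Hu Hr]]. apply (frc_mon _ _ _ _ Hu H); auto.
Qed.

Definition spec (l : list form) (x : entry) :=
  (forall g, In g l -> ~ is_box g -> frc (eM x) (ex x) g) /\
  (forall g, In (Box g) l -> if em x then frc (eM x) (ex x) g else frc (eM x) (ex x) (Box g)).

Definition Rel (g : form) : Prop :=
  match g with
  | Imp (Imp _ _) _ => True
  | Imp (Box _) _ => True
  | _ => False
  end.

Definition Qx (g : form) (x : entry) : Prop :=
  match g with
  | Imp (Imp a b) d => em x = false /\ frc (eM x) (ex x) a /\ ~ frc (eM x) (ex x) b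
  | Imp (Box a) b => em x = true /\ ~ frc (eM x) (ex x) a
  | _ => True
  end.

Lemma choose (R : form -> Prop) (P : form -> entry -> Prop) (l : list form) :
  (forall g, In g l -> R g -> exists x, P g x) ->
  exists subs, (forall g, In g l -> R g -> exists x, In x subs /\ P g x) /\
               (forall x, In x subs -> exists g, P g x).
Proof.
  induction l as [|a l IH]; intros H.
  - exists []; split; [intros _ []| intros _ []].
  - destruct IH as [subs [H1 H2]]; [intros; apply H; simpl; auto|].
    destruct (classic (R a)) as [Ra|nRa].
    + destruct (H a (or_introl eq_refl) Ra) as [x Hx].
      exists (x :: subs); split.
      * intros g [<-|Hg] Rg; [exists x; simpl; auto|].
        destruct (H1 g Hg Rg) as [y [Hy Py]]; exists y; simpl; auto.
      * intros y [<-|Hy]; eauto.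
    + exists subs; split; auto.
      intros g [<-|Hg] Rg; [contradiction|auto].
Qed.

Definition GoalRef (l : list form) (subs : list entry) (c : form) : Prop :=
  match c with
  | Var p => ~ In (Var p) l
  | Bot => True
  | Or a b => (exists x, In x subs /\ ~ frc (eM x) (ex x) a) /\
              (exists x, In x subs /\ ~ frc (eM x) (ex x) b)
  | Box a => exists x, In x subs /\ em x = true /\ ~ frc (eM x) (ex x) a
  | _ => False
  end.

Lemma build l c subs :
  ~ In Bot l ->
  (forall a b, ~ In (And a b) l) -> (forall a b, ~ In (Or a b) l) ->
  (forall p a, In (Imp (Var p) a) l -> ~ In (Var p) l) ->
  (forall a b d, ~ In (Imp (And a b) d) l) -> (forall a b d, ~ In (Imp (Or a b) d) l) ->
  (forall x, In x subs -> spec l x) ->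
  (forall g, In g l -> Rel g -> exists x, In x subs /\ Qx g x) ->
  GoalRef l subs c -> CM l c.
Proof.
  intros nBot nAnd nOr nPImp nAndImp nOrImp Hspec Hcov Hgoal.
  assert (H1 : forall i, i < length subs -> forall p, In (Var p) l ->
     mV (eM (Ei subs i)) (ex (Ei subs i)) p).
  { intros i Hi p Hp. destruct (Hspec _ (nth_In _ dE Hi)) as [S _].
    apply (S (Var p) Hp). simpl; auto. }
  exists (glue l subs H1), []. split.
  - intros g Hg. destruct g as [p| |a b|a b|g1 g2|a].
    + simpl; exact Hg.
    + contradiction.
    + exfalso; eapply nAnd; eauto.
    + exfalso; eapply nOr; eauto.
    + apply root_imp.
      2:{ intros x Hx. apply (proj1 (Hspec x Hx)); simpl; auto. }
      destruct g1 as [p| |a b|a b|a b|a].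
      * simpl. intro Hp. exfalso; eapply nPImp; eauto.
      * simpl; tauto.
      * exfalso; eapply nAndImp; eauto.
      * exfalso; eapply nOrImp; eauto.
      * destruct (Hcov _ Hg I) as [x [Hx [_ [Ha Hb]]]].
        intro H. exfalso. apply Hb.
        apply (root_to_sub _ _ _ _ _ Hx H (ex x) (mle_refl _ _) Ha).
      * destruct (Hcov _ Hg I) as [x [Hx [Hm Ha]]].
        intro H. exfalso. apply Ha. eapply root_box_to_sub; eauto.
    + apply root_box. intros x Hx. apply (proj2 (Hspec x Hx)); auto.
  - destruct c as [p| |a b|a b|a b|a]; simpl in Hgoal.
    + simpl; exact Hgoal.
    + simpl; auto.
    + contradiction.
    + destruct Hgoal as [[x [Hx Ha]] [y [Hy Hb]]].
      intros [H|H]; [apply Ha|apply Hb]; eapply root_to_sub; eauto.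
    + contradiction.
    + destruct Hgoal as [x [Hx [Hm Ha]]]. intro H. apply Ha.
      eapply root_box_to_sub; eauto.
Qed.

Lemma entries l c :
  (forall l' c', meas l' c' < meas l c -> ~ G4iSLt l' c' -> CM l' c') ->
  ~ G4iSLt l c ->
  CM l c \/ exists subs, (forall x, In x subs -> spec l x) /\
     (forall g, In g l -> Rel g -> exists x, In x subs /\ Qx g x).
Proof.
  intros IHu NP.
  destruct (classic (CM l c)) as [C|NC]; [left; auto| right].
  destruct (choose Rel (fun g x => spec l x /\ Qx g x) l) as [subs [Hc Hs]].
  2:{ exists subs; split.
      - intros x Hx; destruct (Hs x Hx) as [g [S _]]; auto.
      - intros g Hg Rg; destruct (Hc g Hg Rg) as [x [Hx [_ Q]]]; eauto. }
  intros g Hg Rg. destruct g as [| | | |g1 d|]; try contradiction.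
  destruct g1 as [| | | |a b|a]; try contradiction.
  -
    destruct (perm_ex _ _ Hg) as [l' HP].
    assert (Hm : sumL l = 9 * e a * e b * e d + sumL l').
    { rewrite (sumL_perm _ _ HP). cbn [sumL e]. lia. }
    pose proof (e_ge a) as Ea; pose proof (e_ge b) as Eb; pose proof (e_ge c) as Ec; pose proof (e_ge d) as Ed.
    assert (Eab : 9 <= e a * e b) by nia.
    destruct (classic (G4iSLt (d :: l') c)) as [P2|nP2].
    2:{ exfalso; apply NC.
        destruct (IHu (d :: l') c) as [M [w [H1 H2]]]; auto.
        { unfold meas; cbn [sumL]; rewrite Hm; nia. }
        exists M, w; split; auto. intros f Hf.
        destruct (perm_in _ _ _ _ HP Hf) as [->|Hf'].
        - simpl. intros v Hv _. eapply frc_mon; eauto. apply H1; simpl; auto.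
        - apply H1; simpl; auto. }
    destruct (IHu (a :: Imp b d :: l') b) as [M [w [H1 H2]]].
    { unfold meas; cbn [sumL e]; rewrite Hm; nia. }
    { intro H. apply NP. eapply ImpImpL; eauto. apply ImpR; auto. }
    exists (mkE M w false); simpl. split; [split|].
    + intros f Hf Hnb. destruct (perm_in _ _ _ _ HP Hf) as [->|Hf'].
      * simpl. intros v Hv Hab. assert (Hva : frc M v a) by (eapply frc_mon; eauto; apply H1; simpl; auto).
        assert (Hvb := Hab v (mle_refl _ _) Hva).
        apply (H1 (Imp b d) (or_intror (or_introl eq_refl)) v Hv Hvb).
      * apply H1; simpl; auto.
    + intros f Hf. destruct (perm_in _ _ _ _ HP Hf) as [Hx|Hf']; [discriminate|].
      apply H1; simpl; auto.
    + split; auto. split; auto. apply H1; simpl; auto.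
  -
    destruct (perm_ex _ _ Hg) as [l' HP].
    destruct (split_box_ok l') as [Hb Hp].
    set (P := fst (split_box l')) in *. set (G := snd (split_box l')) in *.
    assert (Hm : sumL l = 9 * e a * e d + sumL P + sumL (map Box G)).
    { rewrite (sumL_perm _ _ HP). cbn [sumL e]. rewrite (sumL_perm _ _ Hp), sumL_app. lia. }
    pose proof (sumL_mapBox G) as EG.
    pose proof (e_ge a) as Ea; pose proof (e_ge c) as Ec; pose proof (e_ge d) as Ed.
    assert (Ead : 9 <= e a * e d) by nia.
    assert (HD : Permutation l (P ++ map Box G ++ [Imp (Box a) d])).
    { eapply perm_trans; [exact HP|]. eapply perm_trans; [apply perm_skip, Hp|].
      rewrite app_assoc. apply Permutation_cons_append. }
    destruct (classic (G4iSLt (P ++ map Box G ++ [d]) c)) as [P2|nP2].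
    2:{ exfalso; apply NC.
        destruct (IHu (P ++ map Box G ++ [d]) c) as [M [w [H1 H2]]]; auto.
        { unfold meas; rewrite !sumL_app; cbn [sumL]; rewrite Hm; nia. }
        exists M, w; split; auto. intros f Hf.
        destruct (perm_in _ _ _ _ HP Hf) as [->|Hf'].
        - simpl. intros v Hv _. eapply frc_mon; eauto. apply H1.
          apply in_or_app; right; apply in_or_app; right; simpl; auto.
        - apply (Permutation_in _ Hp) in Hf'. apply H1.
          apply in_app_or in Hf'; apply in_or_app; destruct Hf'; auto.
          right; apply in_or_app; auto. }
    destruct (IHu (P ++ G ++ [d; Box a]) a) as [M [w [H1 H2]]].
    { unfold meas; rewrite !sumL_app; cbn [sumL e]; rewrite Hm; nia. }
    { intro H. apply NP. eapply BoxImpL; eauto. }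
    exists (mkE M w true); simpl. split; [split|].
    + intros f Hf Hnb. destruct (perm_in _ _ _ _ HP Hf) as [->|Hf'].
      * simpl. intros v Hv _. eapply frc_mon; eauto. apply H1.
        apply in_or_app; right; apply in_or_app; right; simpl; auto.
      * apply (Permutation_in _ Hp) in Hf'. apply H1. apply in_or_app; left.
        eapply in_split_nb; eauto.
    + intros f Hf. destruct (perm_in _ _ _ _ HP Hf) as [Hx|Hf']; [discriminate|].
      apply (Permutation_in _ Hp) in Hf'. apply H1. apply in_or_app; right.
      apply in_or_app; left. eapply in_split_b; eauto.
    + split; auto.
Qed.

Lemma step l c :
  (forall l' c', meas l' c' < meas l c -> ~ G4iSLt l' c' -> CM l' c') ->
  ~ G4iSLt l c -> CM l c.
Proof.
  intros IHu NP.
  pose proof (e_ge c) as Ec.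
  destruct (classic (In Bot l)) as [HB|nBot].
  { exfalso; apply NP. destruct (perm_ex _ _ HB) as [l' HP]. eapply BotL; eauto. }
  destruct (classic (exists a b, In (And a b) l)) as [[a [b HA]]|nAnd].
  { destruct (perm_ex _ _ HA) as [l' HP].
    pose proof (e_ge a) as Ea; pose proof (e_ge b) as Eb.
    destruct (IHu (a :: b :: l') c) as [M [w [H1 H2]]].
    - unfold meas; rewrite (sumL_perm _ _ HP); cbn [sumL e]; nia.
    - intro H; apply NP; eapply AndL; eauto.
    - exists M, w; split; auto. intros f Hf.
      destruct (perm_in _ _ _ _ HP Hf) as [->|Hf'].
      + simpl; split; apply H1; simpl; auto.
      + apply H1; simpl; auto. }
  destruct (classic (exists a b, In (Or a b) l)) as [[a [b HA]]|nOr].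
  { destruct (perm_ex _ _ HA) as [l' HP].
    pose proof (e_ge a) as Ea; pose proof (e_ge b) as Eb.
    destruct (classic (G4iSLt (a :: l') c)) as [P1|nP1].
    - destruct (IHu (b :: l') c) as [M [w [H1 H2]]].
      + unfold meas; rewrite (sumL_perm _ _ HP); cbn [sumL e]; nia.
      + intro H; apply NP; eapply OrL; [exact P1|exact H|exact HP].
      + exists M, w; split; auto. intros f Hf.
        destruct (perm_in _ _ _ _ HP Hf) as [->|Hf'].
        * simpl; right; apply H1; simpl; auto.
        * apply H1; simpl; auto.
    - destruct (IHu (a :: l') c) as [M [w [H1 H2]]]; auto.
      + unfold meas; rewrite (sumL_perm _ _ HP); cbn [sumL e]; nia.
      + exists M, w; split; auto. intros f Hf.
        destruct (perm_in _ _ _ _ HP Hf) as [->|Hf'].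
        * simpl; left; apply H1; simpl; auto.
        * apply H1; simpl; auto. }
  destruct (classic (exists p a, In (Imp (Var p) a) l /\ In (Var p) l)) as [[p [a [HI HV]]]|nPImp].
  { destruct (perm_ex _ _ HI) as [l1 HP1].
    destruct (perm_in _ _ _ _ HP1 HV) as [Hx|HV1]; [discriminate|].
    destruct (perm_ex _ _ HV1) as [l2 HP2].
    assert (HP : Permutation l (Var p :: Imp (Var p) a :: l2)).
    { eapply perm_trans; [exact HP1|]. eapply perm_trans; [apply perm_skip, HP2|]. apply perm_swap. }
    pose proof (e_ge a) as Ea.
    destruct (IHu (Var p :: a :: l2) c) as [M [w [H1 H2]]].
    - unfold meas; rewrite (sumL_perm _ _ HP); cbn [sumL e]; nia.
    - intro H; apply NP; eapply PImpL; eauto.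
    - exists M, w; split; auto. intros f Hf.
      destruct (perm_in _ _ _ _ HP Hf) as [->|[<-|Hf']].
      + apply H1; simpl; auto.
      + simpl; intros v Hv _. eapply frc_mon; eauto. apply H1; simpl; auto.
      + apply H1; simpl; auto. }
  destruct (classic (exists a b d, In (Imp (And a b) d) l)) as [[a [b [d HA]]]|nAndImp].
  { destruct (perm_ex _ _ HA) as [l' HP].
    pose proof (e_ge a) as Ea; pose proof (e_ge b) as Eb; pose proof (e_ge d) as Ed.
    destruct (IHu (Imp a (Imp b d) :: l') c) as [M [w [H1 H2]]].
    - unfold meas; rewrite (sumL_perm _ _ HP); cbn [sumL e]; nia.
    - intro H; apply NP; eapply AndImpL; eauto.
    - exists M, w; split; auto. intros f Hf.
      destruct (perm_in _ _ _ _ HP Hf) as [->|Hf'].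
      + simpl; intros v Hv [Ha Hb].
        apply (H1 _ (or_introl eq_refl) v Hv Ha v (mle_refl _ _) Hb).
      + apply H1; simpl; auto. }
  destruct (classic (exists a b d, In (Imp (Or a b) d) l)) as [[a [b [d HA]]]|nOrImp].
  { destruct (perm_ex _ _ HA) as [l' HP].
    pose proof (e_ge a) as Ea; pose proof (e_ge b) as Eb; pose proof (e_ge d) as Ed.
    destruct (IHu (Imp a d :: Imp b d :: l') c) as [M [w [H1 H2]]].
    - unfold meas; rewrite (sumL_perm _ _ HP); cbn [sumL e]; nia.
    - intro H; apply NP; eapply OrImpL; eauto.
    - exists M, w; split; auto. intros f Hf.
      destruct (perm_in _ _ _ _ HP Hf) as [->|Hf'].
      + simpl; intros v Hv [Ha|Hb].
        * apply (H1 _ (or_introl eq_refl) v Hv Ha).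
        * apply (H1 _ (or_intror (or_introl eq_refl)) v Hv Hb).
      + apply H1; simpl; auto. }
  assert (nA : forall a b, ~ In (And a b) l) by (intros a b H; apply nAnd; eauto).
  assert (nO : forall a b, ~ In (Or a b) l) by (intros a b H; apply nOr; eauto).
  assert (nP : forall p a, In (Imp (Var p) a) l -> ~ In (Var p) l) by (intros p a H H'; apply nPImp; eauto).
  assert (nAI : forall a b d, ~ In (Imp (And a b) d) l) by (intros a b d H; apply nAndImp; eauto).
  assert (nOI : forall a b d, ~ In (Imp (Or a b) d) l) by (intros a b d H; apply nOrImp; eauto).
  destruct c as [p| |a b|a b|a b|a].
  - destruct (classic (In (Var p) l)) as [HV|nV].
    { exfalso; apply NP. destruct (perm_ex _ _ HV) as [l' HP]. eapply IdP; eauto. }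
    destruct (entries _ _ IHu NP) as [C|[subs [Hs Hc]]]; auto.
    eapply build with (subs := subs); eauto.
  - destruct (entries _ _ IHu NP) as [C|[subs [Hs Hc]]]; auto.
    eapply build with (subs := subs); eauto. simpl; auto.
  - pose proof (e_ge a) as Ea; pose proof (e_ge b) as Eb.
    destruct (classic (G4iSLt l a)) as [P1|nP1].
    + destruct (IHu l b) as [M [w [H1 H2]]].
      * unfold meas; cbn [e]; nia.
      * intro H; apply NP; apply AndR; auto.
      * exists M, w; split; auto. simpl; tauto.
    + destruct (IHu l a) as [M [w [H1 H2]]]; auto.
      * unfold meas; cbn [e]; nia.
      * exists M, w; split; auto. simpl; tauto.
  - pose proof (e_ge a) as Ea; pose proof (e_ge b) as Eb.
    destruct (entries _ _ IHu NP) as [C|[subs [Hs Hc]]]; auto.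
    destruct (IHu l a) as [Ma [wa [H1a H2a]]].
    { unfold meas; cbn [e]; nia. }
    { intro H; apply NP; apply OrR1; auto. }
    destruct (IHu l b) as [Mb [wb [H1b H2b]]].
    { unfold meas; cbn [e]; nia. }
    { intro H; apply NP; apply OrR2; auto. }
    apply build with (subs := mkE Ma wa false :: mkE Mb wb false :: subs); auto.
    + intros x [<-|[<-|Hx]]; auto; split; cbn [em eM ex]; intros g0 Hg0; auto.
    + intros g Hg Rg. destruct (Hc g Hg Rg) as [x [Hx Q]]. exists x; simpl; auto.
    + split; [exists (mkE Ma wa false)|exists (mkE Mb wb false)]; simpl; auto.
  - pose proof (e_ge a) as Ea; pose proof (e_ge b) as Eb.
    destruct (IHu (a :: l) b) as [M [w [H1 H2]]].
    + unfold meas; cbn [sumL e]; nia.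
    + intro H; apply NP; apply ImpR; auto.
    + exists M, w; split; [intros; apply H1; simpl; auto|].
      simpl; intro H. apply H2. apply (H w (mle_refl _ _)). apply H1; simpl; auto.
  - pose proof (e_ge a) as Ea.
    destruct (entries _ _ IHu NP) as [C|[subs [Hs Hc]]]; auto.
    destruct (split_box_ok l) as [Hb Hp].
    set (P := fst (split_box l)) in *. set (G := snd (split_box l)) in *.
    pose proof (sumL_mapBox G) as EG.
    destruct (IHu (P ++ G ++ [Box a]) a) as [M [w [H1 H2]]].
    { unfold meas; rewrite (sumL_perm _ _ Hp); rewrite !sumL_app; cbn [sumL e]; nia. }
    { intro H; apply NP; eapply SLtR; eauto. }
    apply build with (subs := mkE M w true :: subs); auto.
    + intros x [<-|Hx]; auto. split; simpl.
      * intros f Hf Hnb. apply (Permutation_in _ Hp) in Hf. apply H1.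
        apply in_or_app; left. eapply in_split_nb; eauto.
      * intros f Hf. apply (Permutation_in _ Hp) in Hf. apply H1.
        apply in_or_app; right. apply in_or_app; left. eapply in_split_b; eauto.
    + intros g Hg Rg. destruct (Hc g Hg Rg) as [x [Hx Q]]. exists x; simpl; auto.
    + exists (mkE M w true); simpl; auto.
Qed.

Lemma compl n : forall l c, meas l c <= n -> G4iSLt l c \/ CM l c.
Proof.
  induction n as [|n IHn]; intros l c Hm.
  - pose proof (e_ge c); unfold meas in Hm; lia.
  - destruct (classic (G4iSLt l c)) as [P|NP]; [left; auto| right].
    apply step; auto. intros l' c' Hlt H. destruct (IHn l' c'); [lia|contradiction|auto].
Qed.

Theorem mainTheorem3 : forall (G : form -> Prop) (a : form),
  iSLH G a ->
  exists G' : list form, (forall b, In b G' -> G b) /\ G4iSLt G' a.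
Proof.
  intros G a H. destruct (hfin _ _ H) as [L [HL HH]].
  exists L; split; auto.
  destruct (compl (meas L a) L a (le_n _)) as [P|[M [w [H1 H2]]]]; auto.
  exfalso; apply H2. eapply hsound; eauto.
Qed.
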